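(* Fix $a\in(0,1/2)$ and $b\in(0,1)$. There exist an absolute constant $C\in(0,1)$ and constants $K,c_1,c_2>0$ depending only on $a,b$ such that for every spread process with parameters $(G,r,T,a,b)$ and every $t\ge1$, $$\big(1-e^{-c_1t^{c_2}}\big)\frac{V_G(r,\lfloor bt-Kt^{1-C}\rfloor)}{V_G(r,t)}\ \le\ \mathbb{E}[\lambda_{G,r}(t)]\ \le\ \frac{V_G(r,\lfloor bt+Kt^{1-C}\rfloor)}{V_G(r,t)}+e^{-c_1t^{c_2}},$$ with the convention $V_G(r,\rho)=0$ for $\rho<0$.
   Context: Spread process. Fix $a,b\in[0,1]$. Let $G=(V,E)$ be a connected, locally finite, undirected graph (finite or countably infinite), $r\in V$ a root, and $T$ a BFS spanning tree of $G$ rooted at $r$ (i.e. $d_T(r,v)=d_G(r,v)$), oriented away from $r$, with parent $p(v)$ for $v\ne r$. The spread process with parameters $(G,r,T,a,b)$ is the random sequence $f_t:V\to\{+1,-1,\bot\}$: $f_t(r)=+1$ for all $t$; $f_0(v)=\bot$ for $v\ne r$; for $t\ge1$ and each $v\ne r$ independently: if $f_{t-1}(v)=\bot\ne f_{t-1}(p(v))$ then $f_t(v)=f_{t-1}(p(v))$ w.p. $1-a$ and $-f_{t-1}(p(v))$ w.p. $a$; if $f_{t-1}(v)\ne\bot$ then $f_t(v)=f_{t-1}(p(v))$ w.p. $b$ and $f_{t-1}(v)$ w.p. $1-b$; if $f_{t-1}(v)=f_{t-1}(p(v))=\bot$ then $f_t(v)=\bot$. Volume: $B_{\rho,G}(v)=\{u:d_G(v,u)\le\rho\}$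 and $V_G(v,\rho)=|B_{\rho,G}(v)|$. Note $\{v:f_t(v)\ne\bot\}=B_{t,G}(r)$. Opinion bias: $\lambda_{G,r}(t)=\dfrac{|\{v:f_t(v)=+1\}|-|\{v:f_t(v)=-1\}|}{|\{v:f_t(v)\ne\bot\}|}$. *)

(* Defs.v *)
From HB Require Import structures.
From mathcomp Require Import all_boot all_order all_algebra.
From mathcomp Require Import all_classical all_reals all_analysis.
From mathcomp Require Import finmap.
Set Implicit Arguments. Unset Strict Implicit. Unset Printing Implicit Defensive.
Import Order.TTheory GRing.Theory Num.Theory.
Local Open Scope classical_set_scope.
Local Open Scope ring_scope.
Local Open Scope fset_scope.

Section Graph.
Variable V : countType.
Variable adj : rel V.

Fixpoint inball (k : nat) (v u : V) : Prop :=
  match k with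
  | 0 => u = v
  | k'.+1 => inball k' v u \/ exists w, inball k' v w /\ adj w u
  end.

Definition ball (k : nat) (v : V) : set V := [set u | inball k v u].

Definition is_gdist (v u : V) (n : nat) : Prop :=
  inball n v u /\ forall m, inball m v u -> (n <= m)%N.

Definition graph_ok : Prop :=
  symmetric adj /\
  (forall v, finite_set [set u | adj v u]) /\
  (forall u v, exists n, inball n u v).

(* p is the parent map of a BFS spanning tree rooted at r:
   every v <> r is joined by an edge of G to its parent, which is one level
   closer to r (so d_T(r,v) = d_G(r,v)). *)
Definition bfs_parent (r : V) (p : V -> V) : Prop :=
  forall v, v <> r ->
    adj (p v) v /\ forall n, is_gdist r (p v) n -> is_gdist r v n.+1.

Definition vol (v : V) (k : nat) : nat := #|` fset_set (ball k v)|.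

Definition volR {R : realType} (v : V) (x : R) : R :=
  if x < 0 then 0 else (vol v (Num.truncn x))%:R.

(* Opinions: Some true = +1, Some false = -1, None = bot.
   The spread process driven by coins A t v (flip w.p. a) and B t v
   (adopt parent's opinion w.p. b), used at time step t for vertex v. *)
Fixpoint spread (r : V) (p : V -> V) (A B : nat -> V -> bool) (t : nat)
  : V -> option bool :=
  match t with
  | 0 => fun v => if v == r then Some true else None
  | t'.+1 => fun v =>
      let f := spread r p A B t' in
      if v == r then Some true else
      match f v, f (p v) with
      | None, Some s => Some (if A t v then ~~ s else s)
      | Some s, _ => if B t v then f (p v) else Some s
      | None, None => None
      end
  end.

Definition count_set (S : set V) : nat := #|` fset_set S|.

Definition bias (R : realType) (f : V -> option bool) : R :=
  ((count_set [set v | f v = Some true])%:R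
   - (count_set [set v | f v = Some false])%:R)
  / (count_set [set v | f v != None])%:R.

(* A, B : independent Bernoulli coins on a probability space:
   A t v ~ Ber(a), B t v ~ Ber(b), the whole family mutually independent
   (every finite-dimensional marginal is the product law). *)

Definition coin_family {R : realType} {d : measure_display}
  {T : measurableType d} (P : probability T R) (a b : R)
  (A B : nat -> V -> T -> bool) : Prop :=
  let X (i : nat * V * bool) := if i.2 then B i.1.1 i.1.2 else A i.1.1 i.1.2 in
  let q (i : nat * V * bool) := if i.2 then b else a in
  (forall i, measurable [set w | X i w]) /\
  (forall (s : seq (nat * V * bool)) (e : nat * V * bool -> bool), uniq s ->
     P (\bigcap_(i in [set` s]) [set w | X i w = e i])
     = (\prod_(i <- s) (if e i then q i else 1 - q i))%:E).

Definition lambda {R : realType} {d : measure_display} {T : measurableType d}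
  (r : V) (p : V -> V) (A B : nat -> V -> T -> bool) (t : nat) (w : T) : R :=
  bias R (spread r p (fun s v => A s v w) (fun s v => B s v w) t).

End Graph.

(* Main.v *)
Require Import Defs.
From HB Require Import structures.
From mathcomp Require Import all_boot all_order all_algebra.
From mathcomp Require Import all_classical all_reals all_analysis.
From mathcomp Require Import measurable_realfun.
From mathcomp Require Import finmap.
From mathcomp Require Import ring lra.
Set Implicit Arguments. Unset Strict Implicit. Unset Printing Implicit Defensive.
Import Order.TTheory GRing.Theory Num.Theory.
Local Open Scope classical_set_scope.
Local Open Scope ring_scope.

Section ExDef.
Variables (R : realType) (V : countType) (a b : R).
Definition Ix := (nat * V * bool)%type.
Definition qc (i : Ix) : R := if i.2 then b else a.
Definition upd (x : Ix -> bool) (i : Ix) (c : bool) : Ix -> bool :=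
  fun j => if j == i then c else x j.
Fixpoint Ex (I : seq Ix) (g : (Ix -> bool) -> R) : R :=
  match I with
  | [::] => g (fun _ => false)
  | i :: I' => qc i * Ex I' (fun x => g (upd x i true))
             + (1 - qc i) * Ex I' (fun x => g (upd x i false))
  end.
Definition dep (I : seq Ix) (g : (Ix -> bool) -> R) :=
  forall x y, (forall j, j \in I -> x j = y j) -> g x = g y.

Lemma dep_upd I g i c : dep (i :: I) g -> dep I (fun x => g (upd x i c)).
Proof.
move=> h x y hxy; apply: h => j; rewrite inE /upd; case: eqP => // _ /= jI.
exact: hxy.
Qed.

Lemma g_upd (U : Type) (g : (Ix -> bool) -> U) x i : g x = g (upd x i (x i)).
Proof. by congr g; apply: funext => j; rewrite /upd; case: eqP => // ->. Qed.

Lemma ExD I f g : Ex I (fun x => f x + g x) = Ex I f + Ex I g.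
Proof.
elim: I f g => [//|i I IH] f g /=; rewrite !IH; ring.
Qed.

Lemma ExZ I c f : Ex I (fun x => c * f x) = c * Ex I f.
Proof. elim: I f => [//|i I IH] f /=; rewrite !IH; ring. Qed.

Lemma Ex_cst I c : Ex I (fun _ => c) = c.
Proof. elim: I => [//|i I IH] /=; rewrite !IH; ring. Qed.

Lemma Ex_sum (U : Type) (s : seq U) I (F : U -> (Ix -> bool) -> R) :
  Ex I (fun x => \sum_(u <- s) F u x) = \sum_(u <- s) Ex I (F u).
Proof.
elim: s => [|u s IH]; first by under eq_fun do rewrite big_nil; rewrite Ex_cst big_nil.
under eq_fun do rewrite big_cons; by rewrite ExD IH big_cons.
Qed.

Lemma Ex_ext I f g : (forall x, f x = g x) -> Ex I f = Ex I g.
Proof. by move=> h; congr Ex; apply: funext. Qed.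
End ExDef.

Section GL.
Variables (R : realType) (V : countType) (d : measure_display) (T : measurableType d)
  (P : probability T R) (a b : R) (A B : nat -> V -> T -> bool).
Hypothesis hc : coin_family P a b A B.

Definition Xf (i : Ix V) : T -> bool := if i.2 then B i.1.1 i.1.2 else A i.1.1 i.1.2.
Definition Xc (w : T) (i : Ix V) : bool := Xf i w.
Definition cyl (J : seq (Ix V)) (c : Ix V -> bool) : set T :=
  \bigcap_(j in [set` J]) [set w | Xf j w = c j].
Definition prodc (J : seq (Ix V)) (c : Ix V -> bool) : R :=
  \prod_(j <- J) (if c j then qc a b j else 1 - qc a b j).

Lemma cyl_cons i J c : cyl (i :: J) c = [set w | Xf i w = c i] `&` cyl J c.
Proof.
rewrite /cyl; apply/seteqP; split => w.
  by move=> h; split; [apply: h; rewrite /= inE eqxx | move=> j jJ; apply: h; rewrite /= inE jJ orbT].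
by move=> [h1 h2] j; rewrite /= inE => /orP[/eqP->//|jJ]; exact: h2.
Qed.

Lemma cyl_nil c : cyl [::] c = setT.
Proof. by rewrite /cyl; apply/seteqP; split => w //= _ j. Qed.

Lemma mXf i : measurable_fun setT (Xf i).
Proof.
apply: (measurable_fun_bool true); rewrite setTI.
have h := hc.1 i; exact: h.
Qed.

Lemma mXeq i c : measurable [set w | Xf i w = c].
Proof.
have mc : measurable ([set c] : set bool) by [].
have := mXf i measurableT mc; rewrite setTI.
by congr measurable; apply/seteqP; split.
Qed.

Lemma mcyl J c : measurable (cyl J c).
Proof.
elim: J => [|i J IH]; first by rewrite cyl_nil.
by rewrite cyl_cons; apply: measurableI => //; exact: mXeq.
Qed.

Lemma mg I (g : (Ix V -> bool) -> R) : dep I g -> measurable_fun setT ((fun w => (g (Xc w))%:E) : T -> \bar R).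
Proof.
elim: I g => [|i I IH] g hg.
  have -> : (fun w => (g (Xc w))%:E) = cst (g (fun _ => false))%:E :> (T -> \bar R); last exact: measurable_cst.
  by apply: funext => w; congr (_%:E); apply: hg.
have -> : (fun w => (g (Xc w))%:E) = (fun w => if Xf i w then (g (upd (Xc w) i true))%:E
                                      else (g (upd (Xc w) i false))%:E) :> (T -> \bar R); last first.
  apply: measurable_fun_ifT; first exact: mXf.
  - by apply: (IH (fun x => g (upd x i true))); apply: dep_upd.
  - by apply: (IH (fun x => g (upd x i false))); apply: dep_upd.
apply: funext => w; rewrite [in LHS](g_upd g (Xc w) i) /Xc.
by case: (Xf i w).
Qed.

Lemma prodc_cons i J c c0 : i \notin J ->
  prodc (i :: J) (upd c i c0) = (if c0 then qc a b i else 1 - qc a b i) * prodc J c.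
Proof.
move=> iJ; rewrite /prodc big_cons /upd eqxx; congr (_ * _).
apply: eq_big_seq => j jJ; have -> : (j == i) = false; last by [].
by apply/eqP => eji; move: iJ; rewrite -eji jJ.
Qed.

Lemma GL I (g : (Ix V -> bool) -> R) J c : uniq I -> uniq J -> (forall j, j \in I -> j \notin J) -> dep I g ->
  (\int[P]_(w in cyl J c) (g (Xc w))%:E = (prodc J c * Ex a b I g)%:E)%E.
Proof.
elim: I g J c => [|i I IH] g J c uI uJ dIJ hg.
  rewrite (eq_integral (fun=> (g (fun _ => false))%:E)); last first.
    by move=> w _; congr (_%:E); apply: hg.
  rewrite integral_cst; last exact: mcyl.
  have hP : P (cyl J c) = (prodc J c)%:E by exact: hc.2.
  transitivity ((g xpred0)%:E * (prodc J c)%:E)%E.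
    by congr (_ * _)%E.
  by rewrite -EFinM mulrC.
move: uI => /= /andP[iI uI].
have iJ : i \notin J by apply: dIJ; rewrite inE eqxx.
have cylU : cyl J c = cyl (i :: J) (upd c i true) `|` cyl (i :: J) (upd c i false).
  have cu : forall c0, cyl J (upd c i c0) = cyl J c.
    move=> c0; rewrite /cyl; apply: eq_bigcapr => j /= jJ; rewrite /upd ifF //.
    by apply/eqP => eji; move: iJ; rewrite -eji jJ.
  rewrite !cyl_cons !cu /upd eqxx; apply/seteqP; split => w; last by case=> -[].
  by move=> h; case hw: (Xf i w); [left|right].
have Hpart : forall c0, (\int[P]_(w in cyl (i :: J) (upd c i c0)) (g (Xc w))%:E =
   ((if c0 then qc a b i else 1 - qc a b i) * prodc J c *
    Ex a b I (fun x => g (upd x i c0)))%:E)%E.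
  move=> c0; rewrite (eq_integral (fun w => (g (upd (Xc w) i c0))%:E)); last first.
    move=> w /set_mem; rewrite cyl_cons => -[/= hw _]; rewrite [in LHS](g_upd g (Xc w) i).
    by rewrite /Xc hw /upd eqxx.
  rewrite (IH (fun x => g (upd x i c0))) //; first by rewrite prodc_cons.
  - by rewrite /= iJ uJ.
  - move=> j jI; rewrite inE negb_or dIJ ?inE ?jI ?orbT // andbT.
    by apply/eqP => eji; move: iI; rewrite -eji jI.
  - exact: dep_upd.
rewrite cylU integral_setU; first last.
- rewrite !cyl_cons /upd eqxx; apply/disj_setPS => w [[/= h1 _] [/= h2 _]].
  by rewrite h1 in h2.
- by rewrite -cylU; apply: measurable_funS (mg hg) => //; exact: mcyl.
- exact: mcyl.
- exact: mcyl.
rewrite !Hpart -EFinD /=; congr (_%:E); ring.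
Qed.

Lemma E_Ex I (g : (Ix V -> bool) -> R) : uniq I -> dep I g ->
  (\int[P]_w (g (Xc w))%:E = (Ex a b I g)%:E)%E.
Proof.
move=> uI hg; rewrite -(cyl_nil (fun _ => false)) (@GL I g [::] (fun _ => false)) //.
  by rewrite /prodc big_nil mul1r.
Qed.

Lemma Ex_indep I I' (g : (Ix V -> bool) -> R) : uniq I -> uniq I' -> dep I g -> dep I' g ->
  Ex a b I g = Ex a b I' g.
Proof.
move=> u u' h h'; apply/eqP; rewrite -(eqe (Ex a b I g)).
by rewrite -(@E_Ex I g) // (@E_Ex I' g).
Qed.
End GL.

Section Det.
Variables (V : countType) (adj : rel V) (r : V) (p : V -> V).
Hypotheses (hG : graph_ok adj) (hp : bfs_parent adj r p).

Lemma inball_mono k k' u w : (k <= k')%N -> inball adj k u w -> inball adj k' u w.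
Proof.
elim: k' => [|k' IH]; first by rewrite leqn0 => /eqP->.
rewrite leq_eqVlt => /orP[/eqP->//|hk] h /=; left; exact: IH.
Qed.

Lemma hexb w : exists n, `[< inball adj n r w >].
Proof. by have [n h] := hG.2.2 r w; exists n; apply/asboolP. Qed.

Definition dist w := ex_minn (hexb w).

Lemma distP w : is_gdist adj r w (dist w).
Proof.
rewrite /dist; case: ex_minnP => n /asboolP h hmin; split => // m hm.
by apply: hmin; apply/asboolP.
Qed.

Lemma dist_gdist w n : is_gdist adj r w n -> dist w = n.
Proof.
move=> [h1 h2]; have [d1 d2] := distP w.
by apply/eqP; rewrite eqn_leq d2 // h2.
Qed.

Lemma inball_dist k w : inball adj k r w <-> (dist w <= k)%N.
Proof.
split; first by move=> h; apply: (distP w).2.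
by move=> h; apply: inball_mono h (distP w).1.
Qed.

Lemma dist_r : dist r = 0%N.
Proof. by apply/eqP; rewrite -leqn0; apply/inball_dist. Qed.

Lemma dist0 w : dist w = 0%N -> w = r.
Proof. by move=> h; have := (distP w).1; rewrite h. Qed.

Lemma dist_p w : w != r -> dist w = (dist (p w)).+1.
Proof.
move=> /eqP wr; apply: dist_gdist; apply: (hp wr).2; exact: distP.
Qed.

Definition spx (x : Ix V -> bool) t :=
  spread r p (fun s v => x (s, v, false)) (fun s v => x (s, v, true)) t.

Lemma spx_S x t w : spx x t.+1 w =
  if w == r then Some true else
  match spx x t w, spx x t (p w) with
  | None, Some s => Some (if x (t.+1, w, false) then ~~ s else s)
  | Some s, _ => if x (t.+1, w, true) then spx x t (p w) else Some s
  | None, None => None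
  end.
Proof. by []. Qed.

Lemma spx_0 x w : spx x 0 w = if w == r then Some true else None.
Proof. by []. Qed.

Lemma reach x t w : (spx x t w != None) = (dist w <= t)%N.
Proof.
elim: t w => [|t IH] w.
  rewrite spx_0; case: (eqVneq w r) => [->|wr]; first by rewrite dist_r.
  rewrite leqn0; apply/esym/negbTE/eqP => /dist0 /eqP; by rewrite (negbTE wr).
rewrite spx_S; case: (eqVneq w r) => [->|wr]; first by rewrite dist_r.
rewrite dist_p // ltnS.
have h1 := IH w; have h2 := IH (p w); rewrite dist_p // in h1.
case e1: (spx x t w) h1 => [s|] /= h1; case e2: (spx x t (p w)) h2 => [s'|] /= h2.
- by case: (x _); rewrite -h2.
- by move/esym: h1 => /ltnW; rewrite -h2.
- by rewrite -h2.
- by rewrite -h2.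
Qed.

Fixpoint Idx t w : seq (Ix V) :=
  match t with
  | 0 => [::]
  | t'.+1 => (t'.+1, w, true) :: (t'.+1, w, false) :: (Idx t' w ++ Idx t' (p w))
  end.

Lemma Idx_time t w j : j \in Idx t w -> (j.1.1 <= t)%N.
Proof.
elim: t w => [//|t IH] w; rewrite /= !inE mem_cat.
case/orP=> [/eqP->//|]; case/orP=> [/eqP->//|].
by case/orP => /IH /leq_trans; apply; exact: leqnSn.
Qed.

Lemma spx_dep t w x y : (forall j, j \in Idx t w -> x j = y j) -> spx x t w = spx y t w.
Proof.
elim: t w => [//|t IH] w h; rewrite !spx_S.
rewrite (IH w); last by move=> j hj; apply: h; rewrite /= !inE mem_cat hj !orbT.
rewrite (IH (p w)); last by move=> j hj; apply: h; rewrite /= !inE mem_cat hj !orbT.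
by rewrite (h (t.+1, w, true)) ?inE ?eqxx // (h (t.+1, w, false)) ?inE ?eqxx ?orbT.
Qed.

End Det.

Definition sg {R : realType} (o : option bool) : R :=
  match o with Some true => 1 | Some false => -1 | None => 0 end.

Section Phi.
Variables (R : realType) (a b : R).
Fixpoint phi (t k : nat) : R :=
  match t with
  | 0 => (k == 0%N)%:R
  | t'.+1 => match k with
             | 0 => 1
             | k'.+1 => if k' == t' then (1 - 2 * a) * phi t' k'
                        else b * phi t' k' + (1 - b) * phi t' k'.+1
             end
  end.

Lemma phi_zero t k : (t < k)%N -> phi t k = 0.
Proof.
elim: t k => [|t IH] [|k] //= hk.
rewrite ltnS in hk; rewrite ifF; last by apply/negbTE; rewrite neq_ltn hk orbT.
by rewrite !IH ?mulr0 ?addr0 // ltnW.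
Qed.
End Phi.

Lemma Ex_cons2 (R : realType) (V : countType) (a b : R) (i j : Ix V) I g :
  Ex a b (i :: j :: I) g =
  qc a b i * (qc a b j * Ex a b I (fun x => g (upd (upd x j true) i true))
            + (1 - qc a b j) * Ex a b I (fun x => g (upd (upd x j false) i true)))
  + (1 - qc a b i) * (qc a b j * Ex a b I (fun x => g (upd (upd x j true) i false))
            + (1 - qc a b j) * Ex a b I (fun x => g (upd (upd x j false) i false))).
Proof. by []. Qed.

Section Key.
Variables (R : realType) (V : countType) (adj : rel V) (r : V) (p : V -> V).
Hypotheses (hG : graph_ok adj) (hp : bfs_parent adj r p).
Local Notation D := (dist r hG).

Lemma sg_step y t w : w != r ->
  sg (spx r p y t.+1 w) = (if (D w <= t)%N then
     (if y (t.+1, w, true) then sg (spx r p y t (p w)) else sg (spx r p y t w))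
   else if D w == t.+1 then (if y (t.+1, w, false) then -1 else 1) * sg (spx r p y t (p w))
   else 0 :> R).
Proof.
move=> wr; rewrite spx_S (negbTE wr).
have h1 := reach hG hp y t w; have h2 := reach hG hp y t (p w).
rewrite (dist_p hG hp wr) in h1 *; set k := D (p w) in h1 h2 *.
case e1: (spx r p y t w) h1 => [s|] /= h1; case e2: (spx r p y t (p w)) h2 => [s'|] /= h2.
- by rewrite -h1; case: (y _); rewrite ?e2.
- by move/esym: h1 => /ltnW; rewrite -h2.
- rewrite -h1 eqSS; have -> : k == t by rewrite eqn_leq -h2 leqNgt -h1.
  by case: (y _); case: s' {e2} => /=; rewrite ?mulN1r ?mul1r ?opprK.
- rewrite -h1 eqSS; have -> : (k == t) = false by apply/negbTE; rewrite neq_ltn [(t < k)%N]ltnNge -h2 orbT.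
  by [].
Qed.
End Key.

Lemma Ex_if (R : realType) (V : countType) (a b : R) I (c : bool) (f g : (Ix V -> bool) -> R) :
  Ex a b I (fun x => if c then f x else g x) = if c then Ex a b I f else Ex a b I g.
Proof. by case: c. Qed.

Section KeyP.
Variables (R : realType) (V : countType) (adj : rel V) (r : V) (p : V -> V).
Hypotheses (hG : graph_ok adj) (hp : bfs_parent adj r p).
Variables (d : measure_display) (T : measurableType d) (P : probability T R)
  (a b : R) (A B : nat -> V -> T -> bool).
Hypothesis hc : coin_family P a b A B.
Local Notation D := (dist r hG).

Lemma Ex_phi t w :
  Ex a b (undup (Idx p t w)) (fun x => sg (spx r p x t w)) = phi a b t (D w).
Proof.
elim: t w => [|t IH] w.
  rewrite /= spx_0; case: (eqVneq w r) => [->|wr]; first by rewrite dist_r.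
  suff -> : D w == 0%N = false by [].
  by apply/negbTE/eqP => /dist0 /eqP; rewrite (negbTE wr).
case: (eqVneq w r) => [->|wr].
  rewrite dist_r (Ex_ext a b _ (g := fun _ => 1)); first by rewrite Ex_cst.
  by move=> x; rewrite spx_S eqxx.
set iB : Ix V := (t.+1, w, true); set iA : Ix V := (t.+1, w, false).
set I' := undup (Idx p t w ++ Idx p t (p w)).
have nI : forall j, j \in I' -> (j != iB) && (j != iA).
  move=> j; rewrite mem_undup mem_cat => /orP[]/Idx_time hj; apply/andP; split;
  apply/eqP => ej; by move: hj; rewrite ej /= ltnn.
have hU : undup (Idx p t.+1 w) = iB :: iA :: I'.
  rewrite /= ifN; last first.
    rewrite inE negb_or; apply/andP; split; first by apply/eqP; case.
    by apply/negP => h; move: (nI iB); rewrite mem_undup h eqxx => /(_ isT).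
  rewrite ifN //; apply/negP => h; move: (nI iA); rewrite mem_undup h eqxx andbF.
  by move/(_ isT).
have depI : forall u, u \in [:: w; p w] -> dep I' (fun x => sg (spx r p x t u) : R).
  move=> u hu x y hxy; congr sg; apply: spx_dep => j hj; apply: hxy.
  by rewrite mem_undup mem_cat; move: hu; rewrite !inE => /orP[]/eqP eu; rewrite -eu hj ?orbT.
have EI : forall u, u \in [:: w; p w] ->
    Ex a b I' (fun x => sg (spx r p x t u)) = phi a b t (D u).
  move=> u hu; rewrite -IH; apply: (Ex_indep hc) => //; first exact: undup_uniq.
    exact: undup_uniq.
  - exact: depI.
  - move=> x y hxy; congr sg; apply: spx_dep => j hj; apply: hxy; by rewrite mem_undup.
have key : forall be ga, Ex a b I' (fun x => sg (spx r p (upd (upd x iA ga) iB be) t.+1 w)) =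
   if (D w <= t)%N then (if be then phi a b t (D (p w)) else phi a b t (D w))
   else if D w == t.+1 then (if ga then -1 else 1) * phi a b t (D (p w)) else 0.
  move=> be ga.
  have hsp : forall x u, u \in [:: w; p w] ->
      spx r p (upd (upd x iA ga) iB be) t u = spx r p x t u.
    move=> x u hu; apply: spx_dep => j hj; rewrite /upd.
    have := nI j; rewrite mem_undup mem_cat.
    have -> : (j \in Idx p t w) || (j \in Idx p t (p w)).
      by move: hu; rewrite !inE => /orP[]/eqP eu; rewrite -eu hj ?orbT.
    by move=> /(_ isT) /andP[/negbTE-> /negbTE->].
  rewrite (Ex_ext a b _ (g := fun x => if (D w <= t)%N then
       (if be then sg (spx r p x t (p w)) else sg (spx r p x t w))
     else if D w == t.+1 then (if ga then -1 else 1) * sg (spx r p x t (p w)) else 0)); last first.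
    move=> x; rewrite (@sg_step R _ _ _ _ hG hp) // !hsp ?inE ?eqxx ?orbT //.
    rewrite /upd /iA /iB (_ : ((t.+1, w, false) == (t.+1, w, true)) = false) ?eqxx //.
    by apply/negbTE/eqP; case.
  rewrite !Ex_if ExZ Ex_cst !EI ?inE ?eqxx ?orbT //.
rewrite hU Ex_cons2 !key /qc /=.
rewrite (dist_p hG hp wr) eqSS /=; set k := D (p w).
case: (ltngtP k t) => h.
- ring.
- rewrite (phi_zero _ _ h) (phi_zero _ _ (ltn_trans h (ltnSn k))); ring.
- ring.
Qed.
End KeyP.

Section Count.
Variables (V : countType) (adj : rel V) (r : V) (p : V -> V).
Hypotheses (hG : graph_ok adj) (hp : bfs_parent adj r p).
Local Notation D := (dist r hG).

Lemma fin_ball k : finite_set (Defs.ball adj k r).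
Proof.
elim: k => [|k IH].
  apply: (sub_finite_set (B := [set r])); last exact: finite_set1.
  by move=> u /= ->.
apply: (sub_finite_set (B := Defs.ball adj k r `|` \bigcup_(w in Defs.ball adj k r) [set u | adj w u])).
  move=> u [h|[w [h1 h2]]]; [left; exact: h|right; exists w; [exact: h1|exact: h2]].
rewrite finite_setU; split => //; apply: bigcup_finite => // w _.
exact: hG.2.1.
Qed.

Lemma mem_BL k v : (v \in fset_set (Defs.ball adj k r)) = (D v <= k)%N.
Proof.
rewrite in_fset_set; last exact: fin_ball.
apply/idP/idP => [/set_mem/(inball_dist r hG) //|h].
by apply: mem_set; apply/(inball_dist r hG).
Qed.

Lemma count_setE (q : pred V) k : (forall v, q v -> (D v <= k)%N) ->
  count_set [set v | q v] = count q (fset_set (Defs.ball adj k r)).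
Proof.
move=> hq; rewrite /count_set.
have fin : finite_set [set v | q v].
  apply: sub_finite_set (fin_ball k) => v /= /hq /(inball_dist r hG) //.
have -> : fset_set [set v | q v] = [fset x in [seq x <- fset_set (Defs.ball adj k r) | q x]]%fset.
  apply/fsetP => v; rewrite in_fset_set // inE mem_filter mem_BL.
  apply/idP/idP => [/set_mem /= h|/andP[h _]]; first by rewrite h hq.
  exact: mem_set.
by rewrite card_fseq undup_id ?filter_uniq ?fset_uniq // size_filter.
Qed.
End Count.

Lemma sum_sg (R : realType) (V : countType) (f : V -> option bool) (s : seq V) :
  \sum_(v <- s) (sg (f v) : R) =
  (count (fun v => f v == Some true) s)%:R - (count (fun v => f v == Some false) s)%:R.
Proof.
elim: s => [|v s IH]; first by rewrite big_nil subrr.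
rewrite big_cons IH /= !natrD.
by case: (f v) => [[]|] /=; rewrite ?add0r; ring.
Qed.

Section Elam.
Variables (R : realType) (V : countType) (adj : rel V) (r : V) (p : V -> V).
Hypotheses (hG : graph_ok adj) (hp : bfs_parent adj r p).
Variables (d : measure_display) (T : measurableType d) (P : probability T R)
  (a b : R) (A B : nat -> V -> T -> bool).
Hypothesis hc : coin_family P a b A B.
Local Notation D := (dist r hG).

Lemma spx_None x t v : (t < D v)%N -> spx r p x t v = None.
Proof. by move=> h; apply/eqP; rewrite -[_ == _]negbK (reach hG hp) -ltnNge. Qed.

Lemma lam_eq x t : bias R (spx r p x t) =
  (\sum_(v <- fset_set (Defs.ball adj t r)) sg (spx r p x t v)) / (vol adj r t)%:R.
Proof.
rewrite /bias sum_sg /vol.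
rewrite (_ : [set v | spx r p x t v = Some true] = [set v | spx r p x t v == Some true]); last first.
  by apply/seteqP; split => v /= /eqP.
rewrite (_ : [set v | spx r p x t v = Some false] = [set v | spx r p x t v == Some false]); last first.
  by apply/seteqP; split => v /= /eqP.
rewrite !(@count_setE _ _ r hG _ t) //; first last.
- by move=> v /eqP h; rewrite -(reach hG hp x) h.
- by move=> v /eqP h; rewrite -(reach hG hp x) h.
- by move=> v h; rewrite -(reach hG hp x).
congr (_ / _%:R).
transitivity (count_set [set v | (D v <= t)%N]).
  rewrite (@count_setE _ _ r hG _ t) //; apply: eq_in_count => v.
  by move=> _; rewrite (reach hG hp).
rewrite /count_set; congr (#|` fset_set _|)%fset; apply/seteqP; split => v /= /(inball_dist r hG) //.
Qed.

Lemma E_lambda t : (\int[P]_w (lambda r p A B t w)%:E =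
  ((\sum_(v <- fset_set (Defs.ball adj t r)) phi a b t (D v)) / (vol adj r t)%:R)%:E)%E.
Proof.
set BL := fset_set (Defs.ball adj t r).
set Iall := undup (flatten [seq Idx p t v | v <- BL]).
have hIdx : forall v j, v \in BL -> j \in Idx p t v -> j \in Iall.
  move=> v j hv hj; rewrite mem_undup; apply/flatten_mapP; by exists v.
have hdep : dep Iall (fun x => bias R (spx r p x t)).
  move=> x y hxy; congr (bias R _); apply: funext => v.
  case: (leqP (D v) t) => h.
    apply: spx_dep => j hj; apply: hxy; apply: (hIdx v) => //; by rewrite mem_BL.
  by rewrite !spx_None.
rewrite (_ : (fun w => (lambda r p A B t w)%:E) = (fun w => (bias R (spx r p (Xc A B w) t))%:E)) //.
rewrite (E_Ex hc (I := Iall) (g := fun x => bias R (spx r p x t))) ?undup_uniq //.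
congr (_%:E).
rewrite (Ex_ext a b _ (g := fun x => (vol adj r t)%:R^-1 * \sum_(v <- BL) sg (spx r p x t v))); last first.
  by move=> x; rewrite lam_eq mulrC.
rewrite ExZ Ex_sum mulrC; congr (_ / _).
rewrite big_seq [RHS]big_seq; apply: eq_bigr => v hv.
rewrite -(Ex_phi hG hp hc); apply: (Ex_indep hc); rewrite ?undup_uniq //.
- move=> x y hxy; congr sg; apply: spx_dep => j hj; apply: hxy; exact: (hIdx v).
- move=> x y hxy; congr sg; apply: spx_dep => j hj; apply: hxy; by rewrite mem_undup.
Qed.
End Elam.

Section Bounds.
Variables (R : realType) (a b : R).
Hypotheses (ha0 : 0 < a) (ha1 : a < 1 / 2) (hb0 : 0 < b) (hb1 : b < 1).
Local Notation q := (1 - 2 * a).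
Ltac hy := have := ha0; have := ha1; have := hb0; have := hb1.
Lemma q_ge0 : 0 <= q. Proof. hy; lra. Qed.
Lemma q_le1 : q <= 1. Proof. hy; lra. Qed.

Lemma phi_ge0 t k : 0 <= phi a b t k.
Proof.
elim: t k => [|t IH] [|k] //=.
case: eqP => _; first by apply: mulr_ge0 => //; exact: q_ge0.
by apply: addr_ge0; apply: mulr_ge0 => //; hy; lra.
Qed.

Lemma phi_le1 t k : phi a b t k <= 1.
Proof.
elim: t k => [|t IH] [|k] //=.
case: eqP => _.
  have := IH k; have := phi_ge0 t k; have := q_ge0; have := q_le1; hy; nra.
have := IH k; have := IH k.+1; hy; nra.
Qed.

Lemma phi_tt t : phi a b t t = q ^+ t.
Proof. by elim: t => [|t IH] //=; rewrite eqxx IH exprS. Qed.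

Fixpoint psi (n k : nat) : R :=
  match n with
  | 0 => (k == 0%N)%:R
  | n'.+1 => match k with
             | 0 => 1
             | k'.+1 => b * psi n' k' + (1 - b) * psi n' k'.+1
             end
  end.

Lemma phi_SS t k : phi a b t.+1 k.+1 =
  if k == t then q * phi a b t k else b * phi a b t k + (1 - b) * phi a b t k.+1.
Proof. by []. Qed.
Lemma psi_SS n k : psi n.+1 k.+1 = b * psi n k + (1 - b) * psi n k.+1.
Proof. by []. Qed.

Lemma psi_n0 n : psi n 0 = 1. Proof. by case: n. Qed.

Lemma psi_ge0 n k : 0 <= psi n k.
Proof.
elim: n k => [|n IH] [|k] //=.
by apply: addr_ge0; apply: mulr_ge0 => //; hy; lra.
Qed.

Lemma psi_zero n k : (n < k)%N -> psi n k = 0.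
Proof.
elim: n k => [|n IH] [|k] //= hk.
by rewrite !IH ?mulr0 ?addr0 // ltnW.
Qed.

Lemma phi_lb t k : psi t k <= phi a b t.+1 k.
Proof.
elim: t k => [|t IH] [|k].
- by rewrite /=.
- by rewrite psi_zero //; exact: phi_ge0.
- by rewrite /=.
rewrite phi_SS psi_SS.
case: eqP => hk.
  subst k; rewrite (@psi_zero t t.+1) // (@psi_zero t t.+2) //.
  rewrite !mulr0 addr0; apply: mulr_ge0; [exact: q_ge0|exact: phi_ge0].
apply: lerD; apply: ler_wpM2l; rewrite ?IH //; hy; lra.
Qed.

Lemma phi_ub m t k : phi a b t.+1 k <= psi t (k - m) + q ^+ m.
Proof.
elim: t k => [|t IH] k.
  case: (leqP k m) => hkm.
    have -> : (k - m = 0)%N by apply/eqP; rewrite subn_eq0.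
    rewrite psi_n0; have := phi_le1 1 k; have := exprn_ge0 m q_ge0; hy; lra.
  case: k hkm => [//|k] hkm; rewrite phi_SS.
  case: eqP => hk.
    subst k; have m0 : m = 0%N by move: hkm; rewrite ltnS leqn0 => /eqP.
    subst m; rewrite expr0 /= mulr1; have := q_le1; hy; lra.
  rewrite !phi_zero ?mulr0 ?addr0; first last.
  - by case: k hk {hkm}.
  - by case: k hk {hkm}.
  by apply: addr_ge0; [exact: psi_ge0|exact: exprn_ge0 q_ge0].
case: (leqP k m) => hkm.
  have -> : (k - m = 0)%N by apply/eqP; rewrite subn_eq0.
  rewrite psi_n0; have := phi_le1 t.+2 k; have := exprn_ge0 m q_ge0; hy; lra.
case: k hkm => [//|k] hkm; rewrite ltnS in hkm.
rewrite phi_SS subSn //.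
case: eqP => hk.
  rewrite hk phi_tt -exprS; apply: ler_wpDl; first exact: psi_ge0.
  apply: ler_wiXn2l; [exact: q_ge0|exact: q_le1|].
  by rewrite -hk; apply: leqW.
rewrite psi_SS.
have h1 := IH k; have h2 := IH k.+1; rewrite subSn // in h2.
have -> : b * psi t (k - m) + (1 - b) * psi t (k - m).+1 + q ^+ m =
  b * (psi t (k - m) + q ^+ m) + (1 - b) * (psi t (k - m).+1 + q ^+ m) by ring.
apply: lerD; apply: ler_wpM2l => //; hy; lra.
Qed.

Lemma chern_lo (z : R) : 1 <= z -> forall n k,
  1 - psi n k <= z ^+ k * (1 - b + b / z) ^+ n.
Proof.
move=> hz; have z0 : 0 < z by hy; lra.
have M0 : 0 <= 1 - b + b / z.
  by apply: addr_ge0; [hy; lra|apply: divr_ge0; hy; lra].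
elim=> [|n IH] [|k] /=.
- by rewrite subrr expr0 mulr1.
- rewrite subr0 expr0 mulr1; exact: exprn_ege1.
- by rewrite subrr mulr_ge0 // exprn_ge0.
have -> : 1 - (b * psi n k + (1 - b) * psi n k.+1) =
  b * (1 - psi n k) + (1 - b) * (1 - psi n k.+1) by ring.
have -> : z ^+ k.+1 * (1 - b + b / z) ^+ n.+1 =
  b * (z ^+ k * (1 - b + b / z) ^+ n) + (1 - b) * (z ^+ k.+1 * (1 - b + b / z) ^+ n).
  rewrite !exprS; field; hy; lra.
apply: lerD; apply: ler_wpM2l => //; hy; lra.
Qed.

Lemma chern_hi (y : R) : 1 <= y -> forall n k,
  psi n k * y ^+ k <= (1 - b + b * y) ^+ n.
Proof.
move=> hyy; have M1 : 1 <= 1 - b + b * y by hy; nra.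
elim=> [|n IH] [|k] /=.
- by rewrite !expr0 mulr1.
- by rewrite mul0r expr0.
- by rewrite expr0 mulr1; exact: exprn_ege1.
have -> : (b * psi n k + (1 - b) * psi n k.+1) * y ^+ k.+1 =
  (b * y) * (psi n k * y ^+ k) + (1 - b) * (psi n k.+1 * y ^+ k.+1) by rewrite exprS; ring.
rewrite [(1 - b + b * y) ^+ n.+1]exprS; have -> : (1 - b + b * y) * (1 - b + b * y) ^+ n =
  (b * y) * (1 - b + b * y) ^+ n + (1 - b) * (1 - b + b * y) ^+ n by ring.
apply: lerD; apply: ler_wpM2l => //; hy; nra.
Qed.
End Bounds.

Section Analytic.
Variables (R : realType).

Lemma expR_pow (x : R) n : expR x ^+ n = expR (n%:R * x).
Proof. by rewrite expRM_natl. Qed.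

Lemma le_pow_exp (u x : R) n : 0 <= u -> u <= expR x -> u ^+ n <= expR (n%:R * x).
Proof.
move=> u0 ux; rewrite -expR_pow; apply: lerXn2r; rewrite ?nnegrE ?expR_ge0 //.
Qed.

Lemma phi_LB (a b : R) (ha0 : 0 < a) (ha1 : a < 1 / 2) (hb0 : 0 < b) (hb1 : b < 1) (s : R) (t k : nat) : 1 <= s -> s ^+ 4 = t%:R -> (1 <= t)%N ->
  k%:R <= b * t%:R - (3 + 2 / a) * s ^+ 3 -> 1 - expR (- (s ^+ 2)) <= phi a b t k.
Proof.
move=> s1 st t1 hk; have s0 : 0 < s by lra.
case: t t1 st hk => [//|t] _ st hk.
have := phi_lb ha0 ha1 hb0 hb1 t k.
have [z zE] : {z : R | z = 1 + s^-1} by eexists.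
have si0 : 0 <= s^-1 by rewrite invr_ge0; lra.
have z1 : 1 <= z by rewrite zE; lra.
have := chern_lo ha0 ha1 hb0 hb1 z1 t k.
have hM : 1 - b + b / z = 1 - b / (s + 1).
  rewrite zE; field; rewrite (gt_eqF s0) andbT; apply: lt0r_neq0; lra.
rewrite hM => hc hl.
suff : z ^+ k * (1 - b / (s + 1)) ^+ t <= expR (- (s ^+ 2)) by lra.
have hz : z ^+ k <= expR (k%:R * s^-1).
  apply: le_pow_exp; first lra.
  by rewrite zE; exact: expR_ge1Dx.
have hb0' : 0 <= b / (s + 1) <= 1.
  apply/andP; split; first by apply: divr_ge0; lra.
  by rewrite ler_pdivrMr; lra.
have hm : (1 - b / (s + 1)) ^+ t <= expR (t%:R * - (b / (s + 1))).
  apply: le_pow_exp; first lra.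
  by rewrite -[X in X <= _]/(1 + - (b / (s + 1))); exact: expR_ge1Dx.
apply: (le_trans (ler_pM _ _ hz hm)); first by apply: exprn_ge0; lra.
  by apply: exprn_ge0; lra.
rewrite -expRD ler_expR.
have e1 : k%:R * s^-1 <= b * s ^+ 3 - (3 + 2 / a) * s ^+ 2.
  rewrite -[k%:R * _]/(k%:R / s) ler_pdivrMr //.
  move: hk; rewrite -st; set K := 3 + 2 / a; move=> hk.
  suff -> : (b * s ^+ 3 - K * s ^+ 2) * s = b * s ^+ 4 - K * s ^+ 3 by [].
  ring.
have e2 : t%:R * - (b / (s + 1)) = - (b * ((s - 1) * (s ^+ 2 + 1))).
  have -> : t%:R = s ^+ 4 - 1 by rewrite st -addn1 natrD addrK.
  field; lra.
rewrite e2.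
have K3 : 3 <= 3 + 2 / a by have := divr_ge0 (ler0n _ 2) (ltW ha0); lra.
have hs2 : 1 <= s ^+ 2 by nra.
have : 3 * s ^+ 2 <= (3 + 2 / a) * s ^+ 2 by nra.
move: e1; set K := 3 + 2 / a => e1 e3.
have : b * s ^+ 2 <= s ^+ 2 by nra.
have : b - b * s <= 0 by nra.
have -> : b * ((s - 1) * (s ^+ 2 + 1)) = b * s ^+ 3 - b * s ^+ 2 + b * s - b by ring.
lra.
Qed.

Lemma phi_UB (a b : R) (ha0 : 0 < a) (ha1 : a < 1 / 2) (hb0 : 0 < b) (hb1 : b < 1)
  (s : R) (t k : nat) : 1 <= s -> s ^+ 4 = t%:R -> (1 <= t)%N -> (k <= t)%N ->
  b * t%:R + (3 + 2 / a) * s ^+ 3 < k%:R -> phi a b t k <= expR (- (s ^+ 2)).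
Proof.
move=> s1 st t1 kt hk; have s0 : 0 < s by lra.
have si0 : 0 < s^-1 by rewrite invr_gt0.
have s2 : 1 <= s ^+ 2 by nra.
have s23 : s ^+ 2 <= s ^+ 3 by rewrite exprS; nra.
have s34 : s ^+ 3 <= s ^+ 4 by rewrite [s ^+ 4]exprS; nra.
have [x xE] : {x : R | x = 2 / a * s ^+ 3} by eexists.
have x0 : 0 <= x by rewrite xE; apply: mulr_ge0; [apply: divr_ge0|apply: exprn_ge0]; lra.
set m := Num.truncn x.
have hm1 : m%:R <= x by rewrite truncn_le.
have hm2 : x < m%:R + 1 by rewrite natr1; exact: truncnS_gt.
have hK : (3 + 2 / a) * s ^+ 3 = 3 * s ^+ 3 + x by rewrite xE; ring.
have bt0 : 0 <= b * t%:R by apply: mulr_ge0; lra.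
have mk : (m <= k)%N by rewrite -(ler_nat R); lra.
case: t st t1 kt hk bt0 => [//|t] st _ kt hk bt0.
have pu := phi_ub ha0 ha1 hb0 hb1 m t k.
have hq : (1 - 2 * a) ^+ m <= expR (- (2 * s ^+ 2)).
  apply: (le_trans (le_pow_exp (x := - (2 * a)) _ _ _)); first lra.
    by rewrite -[X in X <= _]/(1 + - (2 * a)); exact: expR_ge1Dx.
  rewrite ler_expR.
  have e1 : (x - 1) * (2 * a) <= m%:R * (2 * a) by apply: ler_wpM2r; lra.
  have e2 : (x - 1) * (2 * a) = 4 * s ^+ 3 - 2 * a by rewrite xE; field; exact: lt0r_neq0.
  lra.
set j := (k - m)%N.
have jE : j%:R = k%:R - m%:R :> R by rewrite natrB.
have [y yE] : {y : R | y = 1 + s^-1} by eexists.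
have y1 : 1 <= y by lra.
have ch := chern_hi ha0 ha1 hb0 hb1 y1 t j.
have hM : (1 - b + b * y) ^+ t <= expR (t%:R * (b * s^-1)).
  apply: le_pow_exp; first by rewrite yE; nra.
  have -> : 1 - b + b * y = 1 + b * s^-1 by rewrite yE; ring.
  exact: expR_ge1Dx.
have hE : expR ((s + 1)^-1) <= y.
  have w0 : 0 < (s + 1)^-1 by rewrite invr_gt0; lra.
  have h := expR_ge1Dx (- (s + 1)^-1); rewrite expRN in h.
  have ep := expR_gt0 ((s + 1)^-1).
  have hw : expR ((s + 1)^-1) * (1 - (s + 1)^-1) <= 1.
    rewrite -[X in _ <= X](mulfV (lt0r_neq0 ep)); apply: ler_wpM2l; lra.
  have hy : y * (1 - (s + 1)^-1) = 1.
    rewrite yE; field; rewrite (gt_eqF s0) andbT; apply: lt0r_neq0; lra.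
  have hw2 : 0 < 1 - (s + 1)^-1.
    rewrite subr_gt0 invf_lt1; lra.
  rewrite -(ler_pM2r hw2) hy //.
have hyj : expR (j%:R * (s + 1)^-1) <= y ^+ j.
  rewrite -expR_pow; apply: lerXn2r; rewrite ?nnegrE ?expR_ge0 //; lra.
have hp : psi b t j <= expR (t%:R * (b * s^-1)) / expR (j%:R * (s + 1)^-1).
  rewrite ler_pdivlMr ?expR_gt0 //.
  apply: le_trans _ (le_trans ch hM); apply: ler_wpM2l; first exact: (psi_ge0 ha0 ha1 hb0 hb1).
  exact: hyj.
have hp2 : psi b t j <= expR (- (2 * s ^+ 2)).
  apply: (le_trans hp); rewrite -expRN -expRD ler_expR.
  have tE : t%:R = s ^+ 4 - 1 by rewrite st -addn1 natrD addrK.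
  have P1 : t%:R * (b * s^-1) = b * s ^+ 3 - b * s^-1.
    rewrite tE; field; exact: lt0r_neq0.
  have bs0 : 0 <= b * s^-1 by apply: mulr_ge0; lra.
  have kt' : k%:R <= s ^+ 4 by rewrite st ler_nat.
  have jle : j%:R <= s ^+ 4 by rewrite jE; have := ler0n R m; lra.
  have jgt : b * s ^+ 4 + 3 * s ^+ 3 < j%:R.
    rewrite jE; move: hk; rewrite hK -st; lra.
  have P2e : j%:R * (s + 1)^-1 = j%:R * s^-1 - j%:R * (s * (s + 1))^-1.
    field; rewrite (gt_eqF s0) andbT; apply: lt0r_neq0; lra.
  have P2 : j%:R * (s * (s + 1))^-1 <= s ^+ 2.
    rewrite -[_ * _^-1]/(j%:R / (s * (s + 1))) ler_pdivrMr; last by nra.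
    have -> : s ^+ 2 * (s * (s + 1)) = s ^+ 4 + s ^+ 3 by ring.
    lra.
  have P3 : b * s ^+ 3 + 3 * s ^+ 2 < j%:R * s^-1.
    rewrite -[j%:R * _]/(j%:R / s) ltr_pdivlMr //.
    have -> : (b * s ^+ 3 + 3 * s ^+ 2) * s = b * s ^+ 4 + 3 * s ^+ 3 by ring.
    exact: jgt.
  rewrite P1 P2e; lra.
have -> : - (s ^+ 2) = - (2 * s ^+ 2) + s ^+ 2 by ring.
rewrite expRD.
have e2 : 2 <= expR (s ^+ 2) by have := expR_ge1Dx (s ^+ 2); lra.
have := expR_gt0 (- (2 * s ^+ 2)).
move: pu; rewrite -/j => pu.
nra.
Qed.
End Analytic.

Lemma count_natr (R : realType) (V : Type) (P : pred V) (s : seq V) :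
  (count P s)%:R = \sum_(v <- s) (P v)%:R :> R.
Proof.
elim: s => [|v s IH]; first by rewrite big_nil.
by rewrite big_cons /= natrD IH.
Qed.

Section Vol.
Variables (V : countType) (adj : rel V) (r : V).
Hypothesis hG : graph_ok adj.
Local Notation D := (dist r hG).

Lemma volE k k' : (k <= k')%N ->
  vol adj r k = count (fun v => D v <= k)%N (fset_set (Defs.ball adj k' r)).
Proof.
move=> kk; rewrite /vol -(@count_setE _ _ r hG); last by move=> v /= h; exact: leq_trans kk.
rewrite /count_set; congr (#|` fset_set _|)%fset; apply/seteqP; split => v /= /(inball_dist r hG) //.
Qed.

Lemma vol_mono k k' : (k <= k')%N -> (vol adj r k <= vol adj r k')%N.
Proof.
move=> kk; rewrite (volE kk) (volE (leqnn k')); apply: sub_count => v /= h.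
exact: leq_trans kk.
Qed.
End Vol.

Lemma s_props (R : realType) (t : nat) : (1 <= t)%N ->
  let s := (t%:R : R) `^ (1/4) in
  [/\ 1 <= s, s ^+ 4 = t%:R, t%:R `^ (1 - 1/4) = s ^+ 3 & t%:R `^ (1/2) = s ^+ 2].
Proof.
move=> t1 s.
have t0 : (0 : R) <= t%:R by rewrite ler0n.
have s0 : 0 <= s by exact: powR_ge0.
have hp : forall n : nat, (t%:R : R) `^ (1/4 * n%:R) = s ^+ n.
  by move=> n; rewrite powRrM powR_mulrn.
have s4 : s ^+ 4 = t%:R.
  by rewrite -hp (_ : 1/4 * 4%:R = 1 :> R) ?powRr1 //; field.
split => //.
- rewrite leNgt; apply/negP => hs.
  have : s ^+ 4 < 1 by rewrite exprn_ilt1.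
  by rewrite s4 ltNge ler1n t1.
- by rewrite -hp; congr (_ `^ _); field.
- by rewrite -hp; congr (_ `^ _); field.
Qed.

Theorem mainTheorem12 (R : realType) :
  exists C : R, 0 < C < 1 /\
  forall a b : R, 0 < a < 1 / 2 -> 0 < b < 1 ->
  exists K c1 c2 : R, 0 < K /\ 0 < c1 /\ 0 < c2 /\
  forall (V : countType) (adj : rel V) (r : V) (p : V -> V)
    (d : measure_display) (T : measurableType d) (P : probability T R)
    (A B : nat -> V -> T -> bool) (t : nat),
    graph_ok adj -> bfs_parent adj r p -> coin_family P a b A B ->
    (1 <= t)%N ->
    (((1 - expR (- (c1 * t%:R `^ c2)))
        * (volR adj r (b * t%:R - K * t%:R `^ (1 - C)) / (vol adj r t)%:R))%:E
      <= \int[P]_w (lambda r p A B t w)%:E)%E /\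
    (\int[P]_w (lambda r p A B t w)%:E
      <= (volR adj r (b * t%:R + K * t%:R `^ (1 - C)) / (vol adj r t)%:R
          + expR (- (c1 * t%:R `^ c2)))%:E)%E.
Proof.
exists (1/4); split; first by apply/andP; split; lra.
move=> a b /andP[ha0 ha1] /andP[hb0 hb1].
have a2 : 0 <= 2 / a by apply: divr_ge0; lra.
exists (3 + 2 / a), 1, (1/2); split; first lra.
split; first lra. split; first lra.
move=> V adj r p d T P A B t hG hp hc t1.
rewrite (E_lambda hG hp hc t).
have [s1 st h34 h12] := s_props R t1.
set s := (t%:R : R) `^ (1/4) in s1 st h34 h12.
rewrite h34 h12 mul1r.
set K := 3 + 2 / a.
set BL := fset_set (Defs.ball adj t r).
set D := dist r hG.
set E := \sum_(v <- BL) phi a b t (D v).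
have hBL : forall v, v \in BL -> (D v <= t)%N by move=> v; rewrite mem_BL.
have NE : vol adj r t = count (fun v => D v <= t)%N BL by rewrite (volE r hG (leqnn t)).
have N0 : (0 < vol adj r t)%N.
  rewrite NE -has_count; apply/hasP; exists r; first by rewrite mem_BL dist_r.
  by rewrite /D dist_r.
have Npos : (0 : R) < (vol adj r t)%:R by rewrite ltr0n.
have E0 : 0 <= E by apply: sumr_ge0 => v _; exact: phi_ge0.
have s0 : 0 < s by lra.
have s3 : 0 <= s ^+ 3 by apply: exprn_ge0; lra.
have eps0 : 0 <= expR (- (s ^+ 2)) by exact: expR_ge0.
split; rewrite lee_fin.
- rewrite mulrA; apply: ler_wpM2r; first by rewrite invr_ge0; lra.
  rewrite /volR; case: ifP => hx; first by rewrite mulr0.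
  move/negbT: hx; rewrite -leNgt => hx.
  set rho := Num.truncn _.
  have hrho : rho%:R <= b * t%:R - K * s ^+ 3 by rewrite truncn_le.
  have rt : (rho <= t)%N.
    rewrite -(ler_nat R); apply: le_trans hrho _.
    have : 0 <= K * s ^+ 3 by apply: mulr_ge0 => //; rewrite /K; lra.
    have : b * t%:R <= t%:R by apply: ler_piMl; [rewrite ler0n|lra].
    lra.
  rewrite (volE r hG rt) count_natr mulr_sumr /E.
  apply: ler_sum => v _.
  case hv: (D v <= rho)%N; rewrite /= ?mulr1n ?mulr0n ?mulr0 ?mulr1; last exact: phi_ge0.
  apply: (phi_LB ha0 ha1 hb0 hb1 s1 st t1).
  by apply: le_trans hrho; rewrite ler_nat.
- rewrite /volR ifF; last first.
    apply/negbTE; rewrite -leNgt; apply: addr_ge0; first by apply: mulr_ge0; [lra|rewrite ler0n].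
    by apply: mulr_ge0 => //; rewrite /K; lra.
  set rho := Num.truncn _.
  have hrho : b * t%:R + K * s ^+ 3 < rho.+1%:R by exact: truncnS_gt.
  have key : E <= (vol adj r rho)%:R + expR (- s ^+ 2) * (vol adj r t)%:R.
    apply: (@le_trans _ _ ((count (fun v => D v <= rho)%N BL)%:R
                          + expR (- s ^+ 2) * (count (fun v => D v <= t)%N BL)%:R)).
      rewrite !count_natr mulr_sumr -big_split /=; apply: ler_sum => v _.
      case: (leqP (D v) rho) => h1.
        rewrite mulr1n; have := phi_le1 ha0 ha1 hb0 hb1 t (D v).
        have : 0 <= expR (- s ^+ 2) * (D v <= t)%N%:R by apply: mulr_ge0.
        lra.
      case: (leqP (D v) t) => h2.
        rewrite mulr0n add0r mulr1; apply: (phi_UB ha0 ha1 hb0 hb1 s1 st t1 h2).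
        by apply: lt_le_trans hrho _; rewrite ler_nat.
      by rewrite phi_zero // mulr0 addr0.
    rewrite -NE; apply: lerD => //; rewrite ler_nat.
    have -> : count (fun v => D v <= rho)%N BL = count (fun v => D v <= minn rho t)%N BL.
      by apply: eq_in_count => v /hBL hv; rewrite leq_min hv andbT.
    by rewrite -(volE r hG (geq_minr rho t)); exact: (vol_mono r hG (geq_minl rho t)).
  have -> : (vol adj r rho)%:R / (vol adj r t)%:R + expR (- s ^+ 2) =
    ((vol adj r rho)%:R + expR (- s ^+ 2) * (vol adj r t)%:R) / (vol adj r t)%:R.
    by field; exact: lt0r_neq0.
  by apply: ler_wpM2r => //; rewrite invr_ge0; lra.
Qed.
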